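(* For all $\mathbf x,\mathbf y\in\Omega$, $|g(\mathbf x)\wedge g(\mathbf y)|\ge|\mathbf x\wedge\mathbf y|-2$. In other words, for $k\ge1$, the first $k$ letters of $g(\mathbf x)$ are determined by the first $k+2$ letters of $\mathbf x$.
   Context: Let $\Sigma=\{1,\dots,N\}$ with $N\ge4$, and let $\tau,\kappa,\alpha,\gamma\in\Sigma$ be distinct except that $\tau=\alpha$ is allowed. $\Sigma^*$ denotes finite words, $a^k$ the word of $k$ copies of $a$, $\Omega=\{\omega\kappa^\infty:\omega\in\Sigma^*\}$, and $\mathbf x\wedge\mathbf y$ the maximal common prefix, $|\cdot|$ its length. Let $\mathcal C_M=\{\tau\gamma^k:k\ge2\}\cup\{\kappa\alpha^k\kappa\gamma:k\ge0\}$ and $\mathcal C_{M'}=\{\kappa\alpha^k\kappa\gamma:k\ge0\}\cup\{\kappa\alpha^k\kappa\gamma\gamma:k\ge0\}\cup\{\tau\gamma\gamma\}$; letters of $\Sigma$ are one-letter words. The $M$-decomposition of $\mathbf x\in\Omega$ is $\mathbf x=X_1X_2\cdots$ where each $X_k$ is the longest prefix of the remaining tail $X_kX_{k+1}\cdots$ lying in $\mathcal C_M\cup\Sigma$. Define $g_0:\mathcal C_M\cup\Sigma\to\mathcal C_{M'}\cup\Sigma$ by $\tau\gamma^k\mapsto\kappa\alpha^{k-2}\kappa\gamma$ ($k\ge2$), $\kappa\alpha^k\kappa\gamma\mapsto\kappa\alpha^{k-1}\kappa\gamma\gamma$ ($k\ge1$), $\kappa\kappa\gamma\mapsto\tau\gamma\gamma$,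 $i\mapsto i$ ($i\in\Sigma$), and $g:\Omega\to\Omega$ by $g(\mathbf x)=\prod_{j\ge1}g_0(X_j)$ (concatenation). *)

(* Defs.v *)
From mathcomp Require Import all_boot.
From Stdlib Require Import ClassicalEpsilon.
Set Implicit Arguments. Unset Strict Implicit. Unset Printing Implicit Defensive.

(* Letters of Sigma = {1,...,N} are natural numbers; infinite words are
   functions nat -> nat (position 0 is the first letter). *)

Section Substitution.
Variables (N tau kappa alpha gamma : nat).

Definition inOmega (x : nat -> nat) : Prop :=
  (forall n, 1 <= x n <= N) /\ exists m, forall n, m <= n -> x n = kappa.

Definition is_tg (w : seq nat) : bool :=
  (3 <= size w) && (w == tau :: nseq (size w - 1) gamma).

Definition is_kakg (w : seq nat) : bool :=
  (3 <= size w) && (w == kappa :: nseq (size w - 3) alpha ++ [:: kappa; gamma]).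

Definition inCM (w : seq nat) : bool := is_tg w || is_kakg w.

Definition isBlock (w : seq nat) : bool :=
  inCM w || ((size w == 1) && all (fun a => (1 <= a <= N)) w).

Definition g0 (w : seq nat) : seq nat :=
  if is_tg w then
    (* tau gamma^k  |->  kappa alpha^(k-2) kappa gamma,  k = size w - 1 *)
    kappa :: nseq (size w - 3) alpha ++ [:: kappa; gamma]
  else if is_kakg w then
    if 4 <= size w then
      (* kappa alpha^k kappa gamma |-> kappa alpha^(k-1) kappa gamma gamma, k = size w - 3 >= 1 *)
      kappa :: nseq (size w - 4) alpha ++ [:: kappa; gamma; gamma]
    else
      [:: tau; gamma; gamma]
  else w.

Definition subword (x : nat -> nat) (p l : nat) : seq nat :=
  mkseq (fun i => x (p + i)) l.

Definition blockLen (x : nat -> nat) (p : nat) : nat :=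
  epsilon (inhabits 1%N)
    (fun l => isBlock (subword x p l) /\
              forall l', isBlock (subword x p l') -> l' <= l).

(* starting position of the j-th block X_{j+1} of the M-decomposition *)
Fixpoint bpos (x : nat -> nat) (j : nat) : nat :=
  match j with
  | 0 => 0
  | j'.+1 => bpos x j' + blockLen x (bpos x j')
  end.

Definition block (x : nat -> nat) (j : nat) : seq nat :=
  subword x (bpos x j) (blockLen x (bpos x j)).

Definition gpref (x : nat -> nat) (m : nat) : seq nat :=
  flatten [seq g0 (block x j) | j <- iota 0 m].

(* g(x) = prod_j g_0(X_j); each g_0(X_j) is nonempty, so the n-th letter
   (0-indexed) already occurs in the concatenation of the first n+1 images. *)
Definition g (x : nat -> nat) (n : nat) : nat := nth 0 (gpref x n.+1) n.

End Substitution.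

(* Main.v *)
Require Import Defs.
From mathcomp Require Import all_boot zify.
From Stdlib Require Import ClassicalEpsilon.
Set Implicit Arguments. Unset Strict Implicit. Unset Printing Implicit Defensive.

Section Pf.
Variables (N tau kappa alpha gamma : nat).
Hypotheses (htk : tau != kappa) (htg : tau != gamma) (hka : kappa != alpha)
  (hkg : kappa != gamma) (hag : alpha != gamma).

Local Notation BL := (blockLen N tau kappa alpha gamma).
Local Notation BP := (bpos N tau kappa alpha gamma).
Local Notation G0 := (g0 tau kappa alpha gamma).
Local Notation ISB := (isBlock N tau kappa alpha gamma).
Local Notation GG := (g N tau kappa alpha gamma).
Local Notation GP := (gpref N tau kappa alpha gamma).
Local Notation BK := (block N tau kappa alpha gamma).

Lemma nth_subword x p l o : o < l -> nth 0 (subword x p l) o = x (p + o).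
Proof. by move=> h; rewrite /subword nth_mkseq. Qed.

Lemma size_subword x p l : size (subword x p l) = l.
Proof. by rewrite size_mkseq. Qed.

Lemma subword_eqP x p l w :
  (subword x p l = w) <-> (size w = l /\ forall o, o < l -> x (p+o) = nth 0 w o).
Proof.
split.
- move=> <-; split; first exact: size_subword.
  by move=> o ho; rewrite nth_subword.
- move=> [hs hn]; apply: (@eq_from_nth _ 0); first by rewrite size_subword hs.
  by move=> o; rewrite size_subword => ho; rewrite nth_subword // hn.
Qed.

Lemma nth_pat (a b : nat) k s o :
  nth 0 (a :: nseq k b ++ s) o =
  if o == 0 then a else if o <= k then b else nth 0 s (o - k - 1).
Proof.
case: o => [|o] //=; rewrite nth_cat size_nseq nth_nseq.
case: ifP => h; first by rewrite h.
idtac.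
have -> : o.+1 - k - 1 = o - k by lia.
by [].
Qed.

Definition tgAt (x : nat -> nat) p l :=
  [/\ 3 <= l, x p = tau & forall o, 0 < o < l -> x (p+o) = gamma].
Definition kakgAt (x : nat -> nat) p l :=
  [/\ 3 <= l, x p = kappa, (forall o, 0 < o < l - 2 -> x (p+o) = alpha),
     x (p + (l-2)) = kappa & x (p + (l-1)) = gamma].

Lemma is_tgP x p l : is_tg tau gamma (subword x p l) <-> tgAt x p l.
Proof.
rewrite /is_tg size_subword; split.
- move/andP=> [h3 /eqP/subword_eqP [_ hn]]; split => //.
  + by have := hn 0 ltac:(lia); rewrite addn0.
  + move=> o ho; rewrite hn; last by lia.
    rewrite -[tau :: _]cats0 nth_pat.
    have -> : (o == 0) = false by lia.
    by have -> : (o <= l - 1) = true by lia.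
- move=> [h3 h0 hn]; rewrite h3 /=; apply/eqP/subword_eqP; split.
  + by rewrite /= size_nseq; lia.
  + move=> o ho; rewrite -[tau :: _]cats0 nth_pat.
    case: (o =P 0) => [->|h]; first by rewrite addn0.
    have -> : (o <= l - 1) = true by lia.
    by apply: hn; lia.
Qed.

Lemma is_kakgP x p l : is_kakg kappa alpha gamma (subword x p l) <-> kakgAt x p l.
Proof.
rewrite /is_kakg size_subword; split.
- move/andP=> [h3 /eqP/subword_eqP [_ hn]]; split => //.
  + by have := hn 0 ltac:(lia); rewrite addn0.
  + move=> o ho; rewrite hn; last by lia.
    rewrite nth_pat.
    have -> : (o == 0) = false by lia.
    by have -> : (o <= l - 3) = true by lia.
  + rewrite hn; last by lia.
    rewrite nth_pat.
    have -> : (l - 2 == 0) = false by lia.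
    have -> : (l - 2 <= l - 3) = false by lia.
    by have -> : l - 2 - (l - 3) - 1 = 0 by lia.
  + rewrite hn; last by lia.
    rewrite nth_pat.
    have -> : (l - 1 == 0) = false by lia.
    have -> : (l - 1 <= l - 3) = false by lia.
    by have -> : l - 1 - (l - 3) - 1 = 1 by lia.
- move=> [h3 h0 hn h2 h1]; rewrite h3 /=; apply/eqP/subword_eqP; split.
  + by rewrite /= size_cat size_nseq /=; lia.
  + move=> o ho; rewrite nth_pat.
    case: (o =P 0) => [->|h]; first by rewrite addn0.
    case: (leqP o (l-3)) => h'.
    * by apply: hn; lia.
    * case: (o =P l - 2) => [->|h2'].
      - by have -> : l - 2 - (l - 3) - 1 = 0 by lia.
      - have eo : o = l - 1 by lia.
        by rewrite eo; have -> : l - 1 - (l - 3) - 1 = 1 by lia.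
Qed.

Lemma isBlock_sub x p l : ISB (subword x p l) ->
  [\/ tgAt x p l, kakgAt x p l | l = 1].
Proof.
rewrite /isBlock /inCM; case/orP; first case/orP.
- by move/is_tgP => h; constructor 1.
- by move/is_kakgP => h; constructor 2.
- by rewrite size_subword => /andP [/eqP -> _]; constructor 3.
Qed.

Lemma tg_block x p l : tgAt x p l -> ISB (subword x p l).
Proof. by move/is_tgP => h; rewrite /isBlock /inCM h. Qed.

Lemma kakg_block x p l : kakgAt x p l -> ISB (subword x p l).
Proof. by move/is_kakgP => h; rewrite /isBlock /inCM h orbT. Qed.

Lemma one_block x p : 1 <= x p <= N -> ISB (subword x p 1).
Proof.
move=> h; rewrite /isBlock; apply/orP; right.
by rewrite /subword /= ?addn0 h.
Qed.

Lemma tg_last x p l : tgAt x p l -> x (p + (l-1)) = gamma.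
Proof. by move=> [h3 _ h]; apply: h; lia. Qed.

Lemma block_bound x p m l : (forall n, m <= n -> x n = kappa) ->
  ISB (subword x p l) -> l <= m.+1.
Proof.
move=> hm /isBlock_sub [h|h|->] //.
- have := tg_last h; case: (leqP m (p + (l-1))) => hh.
  + by rewrite hm // => e; move: hkg; rewrite e eqxx.
  + by move=> _; case: h => *; lia.
- case: h => h3 _ _ _ hl; move: hl.
  case: (leqP m (p + (l-1))) => hh.
  + by rewrite hm // => e; move: hkg; rewrite e eqxx.
  + by move=> _; lia.
Qed.

Lemma BL_spec x p : inOmega N kappa x ->
  ISB (subword x p (BL x p)) /\ forall l', ISB (subword x p l') -> l' <= BL x p.
Proof.
move=> [hr [m hm]].
apply: (@epsilon_spec _ (inhabits 1) (fun l => ISB (subword x p l) /\ forall l', ISB (subword x p l') -> l' <= l)).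
have ex : exists l, ISB (subword x p l) by exists 1; apply: one_block.
have ub : forall l, ISB (subword x p l) -> l <= m.+1 by move=> l; apply: block_bound.
case: (ex_maxnP ex ub) => l hl hmax.
by exists l; split.
Qed.

Lemma BL_pos x p : inOmega N kappa x -> 0 < BL x p.
Proof.
move=> hx; have [_ h] := BL_spec p hx; apply: h; apply: one_block.
by case: hx => h1 _; apply: h1.
Qed.

Lemma size_g0 w : size (G0 w) = size w.
Proof.
rewrite /g0; case: ifP => [/andP[h3 _]|_].
  by rewrite /= size_cat size_nseq /=; lia.
case: ifP => [/andP[h3 _]|_] //.
case: ifP => h4; first by rewrite /= size_cat size_nseq /=; lia.
by rewrite /=; lia.
Qed.

Lemma gpref_cat x m k :
  GP x (m + k) = GP x m ++ flatten [seq G0 (BK x j) | j <- iota m k].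
Proof. by rewrite /gpref iotaD map_cat flatten_cat. Qed.

Lemma gpref_S x m : GP x m.+1 = GP x m ++ G0 (BK x m).
Proof. by rewrite -addn1 gpref_cat /= cats0. Qed.

Lemma size_gpref x m : size (GP x m) = BP x m.
Proof.
elim: m => [|m IH] //.
by rewrite gpref_S size_cat IH size_g0 /block size_subword.
Qed.

Lemma BP_S x j : BP x j.+1 = BP x j + BL x (BP x j).
Proof. by []. Qed.

Lemma BP_ge x j : inOmega N kappa x -> j <= BP x j.
Proof.
move=> hx; elim: j => [|j IH] //; rewrite BP_S.
by have := BL_pos (BP x j) hx; lia.
Qed.

Lemma gE x j i : inOmega N kappa x -> BP x j <= i < BP x j.+1 ->
  GG x i = nth 0 (G0 (BK x j)) (i - BP x j).
Proof.
move=> hx hi; have hj := BP_ge j hx.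
rewrite /g.
have -> : i.+1 = j.+1 + (i - j) by lia.
rewrite gpref_cat gpref_S -catA nth_cat size_gpref.
have -> : (i < BP x j) = false by lia.
rewrite nth_cat size_g0 /block size_subword.
by have -> : (i - BP x j < BL x (BP x j)) = true by move: hi; rewrite BP_S; lia.
Qed.

Lemma g0_single a : G0 [:: a] = [:: a].
Proof. by rewrite /g0 /is_tg /is_kakg. Qed.

Lemma g0_tg x p l : tgAt x p l -> forall o, o <= l - 3 ->
  nth 0 (G0 (subword x p l)) o = if o == 0 then kappa else alpha.
Proof.
move=> t o ho; have tt := proj2 (is_tgP x p l) t.
rewrite /g0 tt nth_pat size_subword.
by case: (o =P 0) => // _; rewrite ho.
Qed.

Lemma not_tg_kappa x p l : x p = kappa -> is_tg tau gamma (subword x p l) = false.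
Proof.
move=> e; apply/negbTE/negP => /is_tgP [_ e' _].
by move: htk; rewrite -e' e eqxx.
Qed.

Lemma g0_kakg x p l : kakgAt x p l -> 4 <= l -> forall o, o <= l - 4 ->
  nth 0 (G0 (subword x p l)) o = if o == 0 then kappa else alpha.
Proof.
move=> k h4 o ho; have kk := proj2 (is_kakgP x p l) k.
have ntg : is_tg tau gamma (subword x p l) = false by apply: not_tg_kappa; case: k.
rewrite /g0 ntg kk size_subword h4 nth_pat.
by case: (o =P 0) => // _; rewrite ho.
Qed.

Lemma g0_same x y p L : x p = y p -> ISB (subword x p L) -> ISB (subword y p L) ->
  G0 (subword x p L) = G0 (subword y p L).
Proof.
move=> exy bx by_.
case: (isBlock_sub bx) => [tx|kx|e1].
- case: (isBlock_sub by_) => [ty|ky|e1].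
  + by rewrite /g0 (proj2 (is_tgP _ _ _) tx) (proj2 (is_tgP _ _ _) ty) !size_subword.
  + by case: tx => _ e _; case: ky => _ e' _ _ _; move: htk; rewrite -e -e' exy eqxx.
  + by case: tx; rewrite e1.
- case: (isBlock_sub by_) => [ty|ky|e1].
  + by case: kx => _ e _ _ _; case: ty => _ e' _; move: htk; rewrite -e -e' exy eqxx.
  + have n1 := @not_tg_kappa x p L ltac:(by case: kx).
    have n2 := @not_tg_kappa y p L ltac:(by case: ky).
    by rewrite /g0 n1 n2 (proj2 (is_kakgP _ _ _) kx) (proj2 (is_kakgP _ _ _) ky) !size_subword.
  + by case: kx; rewrite e1.
- by rewrite e1 /subword /mkseq /= !addn0 exy.
Qed.

Lemma dlem x y n j p : inOmega N kappa x -> inOmega N kappa y ->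
  (forall i, i < n -> x i = y i) -> BP x j = p -> BP y j = p -> p < n - 2 ->
  BL x p < BL y p -> forall i, p <= i < n - 2 -> GG x i = GG y i.
Proof.
move=> hx hy hxy hbx hby hp hlt i hi.
have [bx mx] := BL_spec p hx. have [by_ my] := BL_spec p hy.
have hLx := BL_pos p hx.
have hxyp : x p = y p by apply: hxy; lia.
have gx : forall i', p <= i' < p + BL x p -> GG x i' = nth 0 (G0 (subword x p (BL x p))) (i' - p).
  move=> i' hi'; have h' : BP x j <= i' < BP x j.+1 by rewrite BP_S hbx.
  by rewrite (gE hx h') /block hbx.
have gy : forall i', p <= i' < p + BL y p -> GG y i' = nth 0 (G0 (subword y p (BL y p))) (i' - p).
  move=> i' hi'; have h' : BP y j <= i' < BP y j.+1 by rewrite BP_S hby.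
  by rewrite (gE hy h') /block hby.
move: hlt bx mx by_ my gx gy.
set Lx := BL x p; set Ly := BL y p => hlt bx mx by_ my gx gy.
case: (isBlock_sub by_) => [ty|ky|e1]; last by lia.
- have ty' := ty; case: ty' => hy3 hyp hyo.
  case: (isBlock_sub bx) => [tx|kx|e1].
  + have hn : n <= p + Lx.
      case: (leqP n (p + Lx)) => // hlt'.
      have : Lx.+1 <= Lx; last by lia.
      apply: mx; apply: tg_block; case: tx => h3 h0 ho; split => //; first by lia.
      move=> o ho'; case: (o =P Lx) => [->|ne].
      * by rewrite hxy; [apply: hyo; lia | lia].
      * by apply: ho; lia.
    rewrite gx; last by lia.
    rewrite gy; last by lia.
    by rewrite g0_tg // ?g0_tg //; lia.
  + by case: kx => _ e _ _ _; move: htk; rewrite -hyp -hxyp e eqxx.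
  + have : 3 <= Lx; last by lia.
    apply: mx; apply: tg_block; split => //; first by rewrite hxyp.
    by move=> o ho; rewrite hxy; [apply: hyo|]; lia.
- have ky' := ky; case: ky' => hy3 hyp hya hyk hyg.
  case: (isBlock_sub bx) => [tx|kx|e1].
  + by case: tx => _ e _; move: htk; rewrite -hyp -hxyp e eqxx.
  + have kx' := kx; case: kx' => hx3 _ hxa hxk hxg.
    have hn : n <= p + (Lx - 2).
      case: leqP => // h.
      move: hxk; rewrite hxy; last by lia.
      rewrite hya; last by lia.
      by move=> e; move: hka; rewrite e eqxx.
    rewrite gx; last by lia.
    rewrite gy; last by lia.
    by rewrite g0_kakg // ?g0_kakg //; lia.
  + have hn : n <= p + Ly - 1.
      case: leqP => // h.
      have : Ly <= Lx; last by lia.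
      apply: mx.
      have -> : subword x p Ly = subword y p Ly; last by [].
      apply/subword_eqP; split; first exact: size_subword.
      by move=> o ho; rewrite nth_subword // hxy //; lia.
    have one : forall t, p + t < n - 2 -> BL x (p + t) = 1.
      move=> [|t] ht; first by rewrite addn0.
      have [b1 _] := BL_spec (p + t.+1) hx.
      have xq : x (p + t.+1) = alpha by rewrite hxy; [apply: hya|]; lia.
      have xq1 : x (p + t.+1 + 1) = alpha.
        have -> : p + t.+1 + 1 = p + t.+2 by lia.
        by rewrite hxy; [apply: hya|]; lia.
      case: (isBlock_sub b1) => [[h3 e ho]|[h3 e _ _ _]|] //.
      * have := ho 1 ltac:(lia); rewrite xq1 => e'.
        by move: hag; rewrite e' eqxx.
      * by move: hka; rewrite -e xq eqxx.
    have pos : forall t, p + t <= n - 2 -> BP x (j + t) = p + t.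
      elim => [|t IH] ht; first by rewrite !addn0.
      rewrite addnS BP_S IH; last by lia.
      by rewrite one; lia.
    have e1' : BP x (j + (i - p)) = i by rewrite pos; lia.
    have o1 : BL x i = 1.
      by have := one (i - p) ltac:(lia); rewrite subnKC //; lia.
    have hh : BP x (j + (i - p)) <= i < BP x (j + (i - p)).+1.
      by rewrite BP_S e1' o1; lia.
    rewrite (gE hx hh) /block e1' o1 subnn.
    have -> : subword x i 1 = [:: x i] by rewrite /subword /mkseq /= addn0.
    rewrite g0_single /=.
    rewrite gy; last by lia.
    rewrite g0_kakg //; try lia.
    rewrite hxy; last by lia.
    case: (i - p =P 0) => [e0|ne].
    * by have -> : i = p by lia.
    * have := hya (i - p) ltac:(lia); rewrite subnKC; last by lia.
      by move=> ->.
Qed.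

Lemma mainl x y n : inOmega N kappa x -> inOmega N kappa y ->
  (forall i, i < n -> x i = y i) ->
  forall d j, n - 2 - BP x j <= d -> BP x j = BP y j ->
  forall i, BP x j <= i < n - 2 -> GG x i = GG y i.
Proof.
move=> hx hy hxy; elim => [|d IH] j hd he i hi; first by lia.
have [p hp] : exists p, BP x j = p by eexists.
rewrite hp in hd he hi.
have [bx _] := BL_spec p hx. have [by_ _] := BL_spec p hy.
case: (ltngtP (BL x p) (BL y p)) => hc.
- by apply: (dlem hx hy hxy hp (esym he)) => //; lia.
- symmetry; apply: (dlem hy hx (fun i h => esym (hxy i h)) (esym he) hp) => //; lia.
- case: (ltnP i (p + BL x p)) => hi2.
  + have h1 : BP x j <= i < BP x j.+1 by rewrite BP_S hp; lia.
    have h2 : BP y j <= i < BP y j.+1 by rewrite BP_S -he -hc; lia.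
    rewrite (gE hx h1) (gE hy h2) /block hp -he -hc (@g0_same x y p (BL x p)) //.
    * by apply: hxy; lia.
    * by rewrite hc.
  + have hpos := BL_pos p hx.
    apply: (IH j.+1).
    * by rewrite BP_S hp; lia.
    * by rewrite !BP_S -he hp hc.
    * by rewrite BP_S hp; lia.
Qed.

End Pf.

Theorem lemma7p1 (N tau kappa alpha gamma : nat) :
  4 <= N ->
  1 <= tau <= N -> 1 <= kappa <= N -> 1 <= alpha <= N -> 1 <= gamma <= N ->
  tau != kappa -> tau != gamma -> kappa != alpha -> kappa != gamma ->
  alpha != gamma ->
  forall x y : nat -> nat,
    inOmega N kappa x -> inOmega N kappa y ->
    forall n : nat, (forall i, i < n -> x i = y i) ->
    forall i, i < n - 2 ->
      g N tau kappa alpha gamma x i = g N tau kappa alpha gamma y i.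
Proof.
move=> _ _ _ _ _ htk htg hka hkg hag x y hx hy n hxy i hi.
by apply: (mainl htk htg hka hkg hag hx hy hxy (d := n) (j := 0)) => //=; lia.
Qed.
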